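(* Let $k\ge 1$ be an integer and let $r_0,\dots,r_k$ be distinct integers. Then there is an integer $M\ge 1$ such that, for each $\xi\in\mathbb{R}$, there exists at least one index $i\in\{0,1,\dots,k\}$ with $r_i\neq\xi$ for which the point $\xi_i=1/(M(\xi-r_i))$ satisfies \[ \omega^{\mathrm{lead}}_k(\xi_i)=\omega_k(\xi_i)=\omega_k(\xi). \]
   Context: For a polynomial $P\in\mathbb{Z}[x]$, $\|P\|$ denotes the largest absolute value of its coefficients, and $c_k(P)$ denotes the coefficient of $x^k$ in $P$. For $\xi\in\mathbb{R}$ and an integer $n\ge 1$, $\omega_n(\xi)$ is the supremum of all $\omega\in\mathbb{R}$ for which there exist infinitely many non-zero polynomials $P\in\mathbb{Z}[x]$ of degree at most $n$ with $|P(\xi)|\le\|P\|^{-\omega}$. The quantity $\omega^{\mathrm{lead}}_k(\xi)$ is defined in the same way as $\omega_k(\xi)$, except that one restricts to non-zero polynomials $P\in\mathbb{Z}[x]$ of degree at most $k$ satisfying $|c_k(P)|=\|P\|$. *)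

(* Defs.v *)
From HB Require Import structures.
From mathcomp Require Import all_boot all_order all_algebra.
From mathcomp Require Import all_classical all_reals all_analysis.
Set Implicit Arguments. Unset Strict Implicit. Unset Printing Implicit Defensive.
Import Order.TTheory GRing.Theory Num.Theory.
Local Open Scope classical_set_scope.
Local Open Scope ring_scope.

Definition polnorm (P : {poly int}) : nat := \max_(i < size P) absz (nth 0%R P i).

Definition omega_set (R : realType) (lead : bool) (n : nat) (xi : R) : set R :=
  [set w : R | ~ finite_set
     [set P : {poly int} | [/\ P != 0, (size P <= n.+1)%N,
        (lead -> absz (nth 0%R P n) = polnorm P) &
        `|(map_poly (fun z : int => z%:~R : R) P).[xi]|
           <= ((polnorm P)%:R : R) `^ (- w)]]].

Definition omega (R : realType) (n : nat) (xi : R) : \bar R :=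
  ereal_sup (EFin @` omega_set false n xi).

Definition omega_lead (R : realType) (n : nat) (xi : R) : \bar R :=
  ereal_sup (EFin @` omega_set true n xi).

(* Main.v *)
Require Import Defs.
From HB Require Import structures.
From mathcomp Require Import all_boot all_order all_algebra.
From mathcomp Require Import all_classical all_reals all_analysis.
From mathcomp Require Import ring.
Import Order.TTheory GRing.Theory Num.Theory.
Local Open Scope ring_scope.
Local Open Scope classical_set_scope.

Lemma pn_ge (P : {poly int}) j : (absz (P`_j)%R <= polnorm P)%N.
Proof.
rewrite /polnorm; have [jl|jg] := ltnP j (size P).
  by apply: (@leq_bigmax_cond _ _ (fun i : 'I_(size P) => absz (P`_i)) (Ordinal jl)).
by rewrite nth_default.
Qed.

Lemma pn_le (P : {poly int}) N : (forall j, (absz (P`_j)%R <= N)%N) -> (polnorm P <= N)%N.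
Proof. by move=> H; apply/bigmax_leqP => i _; apply: H. Qed.

Lemma pn_eq0 (P : {poly int}) : (polnorm P == 0%N) = (P == 0).
Proof.
apply/eqP/eqP => [H|->].
  apply/polyP => j; rewrite coef0; have := pn_ge P j; rewrite H leqn0.
  by rewrite absz_eq0 => /eqP.
by apply/eqP; rewrite -leqn0; apply: pn_le => j; rewrite coef0.
Qed.

Lemma pn_gt0 (P : {poly int}) : P != 0 -> (0 < polnorm P)%N.
Proof. by rewrite lt0n pn_eq0. Qed.

Lemma pn_ge_int (P : {poly int}) j : `|P`_j| <= (polnorm P)%:Z.
Proof. by rewrite -abszE lez_nat pn_ge. Qed.

Lemma bounded_finite n B :
  finite_set [set P : {poly int} | (size P <= n)%N /\ (polnorm P <= B)%N].
Proof.
pose f (g : {ffun 'I_n.+1 -> 'I_(B + B).+1}) : {poly int} :=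
  \poly_(i < n) ((g (inord i) : nat)%:Z - B%:Z).
apply: (@sub_finite_set _ _ (f @` setT)); last first.
  by apply: finite_image; apply: finite_finset.
move=> P [sP nP].
have hB : forall j, -(B%:Z) <= P`_j <= B%:Z.
  move=> j; rewrite -ler_norml; apply: le_trans (pn_ge_int P j) _.
  by rewrite lez_nat.
have hb : forall i : nat, (absz (P`_i + B%:Z)%R < (B + B).+1)%N.
  move=> i; case/andP: (hB i) => h1 h2.
  rewrite ltnS -lez_nat abszE ger0_norm; last by move: h1; rewrite -subr_ge0 opprK addrC.
  by rewrite PoszD lerD2r.
exists [ffun i : 'I_n.+1 => Ordinal (hb i)] => //.
apply/polyP => j; rewrite /f coef_poly.
case: ltnP => jn.
  have jn1 : (j < n.+1)%N by apply: ltnW.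
  rewrite ffunE inordK //=.
  have h0 : 0 <= P`_j + B%:Z.
    by case/andP: (hB j) => h1 _; move: h1; rewrite -subr_ge0 opprK addrC.
  by rewrite (gez0_abs h0) addrK.
by rewrite nth_default // (leq_trans sP jn).
Qed.

Lemma infinite_unbounded (A : set {poly int}) n :
  (forall P, A P -> (size P <= n)%N) -> ~ finite_set A ->
  forall B, exists P, A P /\ (B <= polnorm P)%N.
Proof.
move=> hs hA B; apply: contrapT => hn; apply: hA.
apply: (sub_finite_set _ (bounded_finite n B)) => P AP; split; first exact: hs.
have [//|hlt] := leqP (polnorm P) B.
by exfalso; apply: hn; exists P; split => //; apply: ltnW.
Qed.

Lemma unbounded_infinite (A : set {poly int}) :
  (forall B, exists P, A P /\ (B <= polnorm P)%N) -> ~ finite_set A.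
Proof.
move=> hB /finite_fsetP [X hX].
have [P [AP hP]] := hB (\max_(x <- finmap.enum_fset X) polnorm x).+1.
have PX : P \in finmap.enum_fset X by move: AP; rewrite hX.
 have := @leq_bigmax_seq _ (finmap.enum_fset X) xpredT polnorm P PX isT.
by rewrite leqNgt hP.
Qed.
Local Open Scope classical_set_scope.

Lemma sup_le_of (R : realType) (A B : set R) :
  (forall w, A w -> forall w', w' < w -> B w') ->
  (ereal_sup (EFin @` A) <= ereal_sup (EFin @` B))%E.
Proof.
move=> H; apply: ge_ereal_sup => _ [w Aw <-].
rewrite leNgt; apply/negP => h.
have ub := @ereal_sup_ubound R (EFin @` B).
move: h; case E : (ereal_sup (EFin @` B)) => [s| |] // h.
- have hs : s < w by rewrite lte_fin in h.
  have Bw' : B ((s + w) / 2) by apply: (H w Aw); rewrite ltr_pdivrMr // mulrDr mulr1 ltrD2r.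
  have := ub _ (ex_intro2 _ _ _ Bw' erefl); rewrite E lee_fin => h2.
  have : s < (s + w) / 2 by rewrite ltr_pdivlMr // mulrDr mulr1 ltrD2l.
  by rewrite ltNge h2.
- have Bw' : B (w - 1) by apply: (H w Aw); rewrite ltrBlDr ltrDl.
  by have := ub _ (ex_intro2 _ _ _ Bw' erefl); rewrite E.
Qed.

Lemma pow_key (R : realType) (c C K w w' : R) : 0 < c -> c <= C -> 0 <= K -> w' < w ->
  exists B0 : R, 1 <= B0 /\ forall a b, B0 <= a -> c * a <= b -> b <= C * a ->
    K * a `^ (- w) <= b `^ (- w').
Proof.
move=> c0 cC K0 ww.
have C0 : 0 < C by apply: lt_le_trans cC.
pose m := Num.min (c `^ (- w')) (C `^ (- w')).
have m0 : 0 < m by rewrite lt_min !powR_gt0.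
pose d := w - w'.
have d0 : 0 < d by rewrite subr_gt0.
exists (Num.max 1 ((K / m) `^ d^-1)); split; first by rewrite le_max lexx.
move=> a b; rewrite ge_max => /andP [a1 aK] cab bCa.
have a0 : 0 < a by apply: lt_le_trans a1.
have b0 : 0 < b by apply: lt_le_trans cab; rewrite mulr_gt0.
have step1 : m * a `^ (- w') <= b `^ (- w').
  have [nw|nw] := leP 0 (- w').
    apply: (@le_trans _ _ ((c * a) `^ (- w'))); last first.
      by apply: ge0_ler_powR => //; rewrite nnegrE ?(ltW b0) // mulr_ge0 // ltW.
    by rewrite powRM ?(ltW c0) ?(ltW C0) ?(ltW a0) // ler_pM2r ?powR_gt0 // ge_min lexx.
  apply: (@le_trans _ _ ((C * a) `^ (- w'))).
    by rewrite powRM ?(ltW c0) ?(ltW C0) ?(ltW a0) // ler_pM2r ?powR_gt0 // ge_min lexx orbT.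
  have wp : 0 < w' by rewrite -oppr_lt0.
  rewrite !powRN lef_pV2 ?posrE ?powR_gt0 ?mulr_gt0 //.
  by apply: ge0_ler_powR; rewrite ?nnegrE ?(ltW wp) ?(ltW b0) // mulr_ge0 // ltW.
have step2 : K <= m * a `^ d.
  rewrite -ler_pdivrMl //.
  apply: (@le_trans _ _ (((K / m) `^ d^-1) `^ d)).
    rewrite -powRrM mulVf ?gt_eqF // powRr1; first by rewrite mulrC.
    by rewrite divr_ge0 // ltW.
  by apply: ge0_ler_powR; rewrite ?nnegrE ?(ltW d0) ?(ltW a0) ?powR_ge0.
apply: le_trans step1.
have -> : a `^ (- w') = a `^ (- w) * a `^ d.
  rewrite -powRD; first by congr (_ `^ _); rewrite /d addrA addNr add0r.
  by rewrite (gt_eqF a0) implybT.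
by rewrite mulrCA [K * _]mulrC ler_pM2l ?powR_gt0.
Qed.
Local Open Scope classical_set_scope.

Definition ev (R : realType) (P : {poly int}) (x : R) : R :=
  (map_poly (fun z : int => z%:~R : R) P).[x].

Definition fam (R : realType) (lead : bool) (n : nat) (xi : R) (w : R) : set {poly int} :=
  [set P : {poly int} | [/\ P != 0, (size P <= n.+1)%N,
        (lead -> absz (nth 0%R P n) = polnorm P) &
        `|(map_poly (fun z : int => z%:~R : R) P).[xi]|
           <= ((polnorm P)%:R : R) `^ (- w)]].

Arguments fam {R}.
Arguments ev {R}.

Lemma omega_setE (R : realType) lead n (xi w : R) :
  omega_set lead n xi w = ~ finite_set (fam lead n xi w).
Proof. by []. Qed.

Lemma transfer (R : realType) (k : nat) (x y w w' : R) (F : {poly int} -> {poly int})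
  (Pr : {poly int} -> Prop) (c C K : R) (lead2 : bool) :
  0 < c -> c <= C -> 0 <= K -> w' < w ->
  (forall P : {poly int}, P != 0 -> (size P <= k.+1)%N -> Pr P ->
   [/\ F P != 0, (size (F P) <= k.+1)%N,
       (lead2 -> absz (nth 0%R (F P) k) = polnorm (F P)),
       c * (polnorm P)%:R <= (polnorm (F P))%:R /\
       (polnorm (F P))%:R <= C * (polnorm P)%:R &
       `|ev (F P) y| <= K * `|ev P x| ]) ->
  ~ finite_set (fam false k x w `&` Pr) ->
  omega_set lead2 k y w'.
Proof.
move=> c0 cC K0 ww HF Hinf.
have [B0 [B01 HB0]] := @pow_key R c C K w w' c0 cC K0 ww.
rewrite omega_setE; apply: unbounded_infinite => B.
pose N := Num.Def.archi_bound (B0 + B%:R / c).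
have hN : B0 + B%:R / c < N%:R.
  apply: archi_boundP; apply: addr_ge0; first exact: le_trans ler01 B01.
  by apply: divr_ge0 => //; apply: ltW.
have hs : forall P, (fam false k x w `&` Pr) P -> (size P <= k.+1)%N.
  by move=> P [[]].
have [P [[[P0 sP _ HP] PrP] NP]] := @infinite_unbounded _ k.+1 hs Hinf N.
have [FP0 sFP lFP [lo up] ev1] := HF P P0 sP PrP.
have NPr : N%:R <= (polnorm P)%:R :> R by rewrite ler_nat.
have aB : B0 <= (polnorm P)%:R.
  apply: le_trans NPr; apply: le_trans (ltW hN).
  by rewrite lerDl divr_ge0 // (ltW c0).
exists (F P); split; last first.
  rewrite -(ler_nat R); apply: le_trans lo.
  rewrite -ler_pdivrMl // mulrC; apply: le_trans NPr; apply: le_trans (ltW hN).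
  by rewrite lerDr (le_trans ler01 B01).
split => //.
apply: le_trans ev1 _; apply: le_trans (HB0 _ _ aB lo up).
exact: (@ler_wpM2l _ K K0 _ _ HP).
Qed.

Lemma lagr_bound (k : nat) (r : 'I_k.+1 -> int) : injective r ->
  exists CL : nat, (0 < CL)%N /\ forall P : {poly int}, (size P <= k.+1)%N ->
    exists i, (polnorm P <= CL * absz (P.[r i]))%N.
Proof.
move=> rinj.
pose V : 'M[rat]_(k.+1) := \matrix_(i, j) ((r i)%:~R ^+ j).
have VU : V \in unitmx.
  pose a : 'rV[rat]_(k.+1) := \row_i (r i)%:~R.
  have -> : V = (Vandermonde k.+1 a)^T by apply/matrixP => i j; rewrite !mxE.
  rewrite unitmxE det_tr det_Vandermonde unitfE.
  apply/prodf_neq0 => i _; apply/prodf_neq0 => j ij; rewrite !mxE subr_eq0.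
  apply/negP => /eqP /intr_inj /rinj eji; move: ij; rewrite eji ltnn.
  done.
pose W := invmx V.
pose D : rat := \sum_j \sum_i `|W j i|.
have D0 : 0 <= D by apply: sumr_ge0 => j _; apply: sumr_ge0 => i _.
exists (Num.Def.archi_bound D).+1; split => // P sP.
case: (@arg_maxnP _ ord0 xpredT (fun i => absz (P.[r i])) isT) => i _ Hi.
exists i.
pose c : 'cV[rat]_(k.+1) := \col_j (P`_j)%:~R.
have vE : forall l, (V *m c) l 0 = (P.[r l])%:~R.
  move=> l; rewrite mxE (horner_coef_wide _ sP) rmorph_sum /=.
  by apply: eq_bigr => j _; rewrite !mxE rmorphM rmorphXn /= mulrC.
have cE : c = W *m (V *m c) by rewrite /W mulKmx.
apply: pn_le => j.
have [jl|jg] := ltnP j k.+1; last first.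
  by rewrite nth_default ?(leq_trans sP jg).
pose jj := Ordinal jl.
have : `|(P`_j)%:~R : rat| <= D * (absz (P.[r i]))%:R.
  have -> : (P`_j)%:~R = c jj 0 by rewrite mxE.
  rewrite cE mxE.
  apply: le_trans (ler_norm_sum _ _ _) _.
  apply: (@le_trans _ _ (\sum_l `|W jj l| * (absz (P.[r i]))%:R)).
    apply: ler_sum => l _; rewrite normrM vE ler_wpM2l //.
    by rewrite -intr_norm -natr_absz ler_nat; apply: (Hi l).
  rewrite -mulr_suml ler_wpM2r //.
  rewrite /D [leRHS](bigD1 jj) //= lerDl.
  by apply: sumr_ge0 => l _; apply: sumr_ge0.
move=> h.
rewrite -(ler_nat rat) natrM.
apply: (@le_trans _ _ (D * (absz (P.[r i]))%:R)).
  by rewrite natr_absz intr_norm.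
rewrite ler_wpM2r //.
apply: le_trans (ltW (archi_boundP D0)) _.
by rewrite ler_nat.
Qed.
Local Open Scope classical_set_scope.

Lemma ev_sum (R : realType) (P : {poly int}) (x : R) n : (size P <= n)%N ->
  ev P x = \sum_(j < n) (P`_j)%:~R * x ^+ j.
Proof.
move=> sP; rewrite /ev (horner_coef_wide _ (_ : size _ <= n)%N).
  by apply: eq_bigr => j _; rewrite coef_map.
by rewrite size_map_inj_poly //; apply: intr_inj.
Qed.

Lemma ev_test (R : realType) (P Q : {poly int}) (x : R) :
  ev (P * Q + 'X - 1) x = ev P x * ev Q x + x - 1.
Proof.
by rewrite /ev rmorphB rmorphD rmorphM /= map_polyX rmorph1 !hornerE.
Qed.

Definition Aj (k : nat) (r : int) (j : nat) : {poly int} :=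
  (r%:P * 'X + 1) ^+ j * 'X^(k - j).

Definition Up (k : nat) (r : int) (P : {poly int}) : {poly int} :=
  \sum_(j < k.+1) P`_j *: Aj k r j.

Definition Tp (k M : nat) (r : int) (P : {poly int}) : {poly int} :=
  \poly_(m < k.+1) ((M ^ m)%N%:Z * (Up k r P)`_m).

Definition Sp (k M : nat) (r : int) (Q : {poly int}) : {poly int} :=
  \sum_(m < k.+1) Q`_m *: ((M%:Z)%:P * ('X - r%:P)) ^+ (k - m).

Lemma size_lin (r : int) : (size ((r%:P * 'X + 1)%R : {poly int}) <= 2)%N.
Proof.
rewrite -polyC1 size_MXaddC; case: ifP => // _.
by rewrite ltnS size_polyC leq_b1.
Qed.

Lemma size_Aj k r j : (j <= k)%N -> (size (Aj k r j) <= k.+1)%N.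
Proof.
move=> jk; rewrite /Aj; apply: leq_trans (size_mul_leq _ _) _.
rewrite size_polyXn.
have h : (size ((r%:P * 'X + 1)%R ^+ j : {poly int}) <= j.+1)%N.
  apply: leq_trans (size_poly_exp_leq _ _) _.
  rewrite ltnS.
  have h1 : ((size ((r%:P * 'X + 1)%R : {poly int})).-1 <= 1)%N.
    by move: (size_lin r); case: (size _) => [|[|[|]]].
  by apply: leq_trans (leq_mul h1 (leqnn j)) _; rewrite mul1n.
rewrite addnS /=; apply: leq_trans (leq_add h (leqnn _)) _.
by rewrite addSn subnKC.
Qed.

Lemma size_Up k r P : (size (Up k r P) <= k.+1)%N.
Proof.
rewrite /Up; apply: (big_ind (fun p : {poly int} => size p <= k.+1)%N).
- by rewrite size_poly0.
- by move=> p q hp hq; apply: leq_trans (size_polyD _ _) _; rewrite geq_max hp.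
- move=> j _; apply: leq_trans (size_scale_leq _ _) _.
  by apply: size_Aj; rewrite -ltnS.
Qed.

Lemma size_lin_pow (r : int) j : (size ((r%:P * 'X + 1)%R ^+ j : {poly int}) <= j.+1)%N.
Proof.
apply: leq_trans (size_poly_exp_leq _ _) _; rewrite ltnS.
have h1 : ((size ((r%:P * 'X + 1)%R : {poly int})).-1 <= 1)%N.
  by move: (size_lin r); case: (size _) => [|[|[|]]].
by apply: leq_trans (leq_mul h1 (leqnn j)) _; rewrite mul1n.
Qed.

Lemma coef_lin_pow (r : int) j : (((r%:P * 'X + 1) ^+ j : {poly int})`_j = r ^+ j)%R.
Proof.
elim: j => [|j IH]; first by rewrite !expr0 coef1.
rewrite exprSr mulrDr mulr1 coefD mulrA coefMX /= coefMC IH.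
by rewrite [X in _ + X]nth_default ?size_lin_pow // addr0 exprSr.
Qed.

Lemma coef_Up k r (P : {poly int}) : (size P <= k.+1)%N -> (Up k r P)`_k = P.[r].
Proof.
move=> sP; rewrite /Up coef_sum (horner_coef_wide _ sP).
apply: eq_bigr => j _; rewrite coefZ /Aj coefMXn.
have jk : (j <= k)%N by rewrite -ltnS.
by rewrite ltnNge leq_subr /= subKn // coef_lin_pow.
Qed.

Lemma pn_sum_scale n (P : {poly int}) (A : nat -> {poly int}) :
  (polnorm (\sum_(j < n) P`_j *: A j) <= polnorm P * \sum_(j < n) polnorm (A j))%N.
Proof.
apply: pn_le => m; rewrite -lez_nat abszE coef_sum.
apply: le_trans (ler_norm_sum _ _ _) _.
rewrite PoszM (big_morph Posz PoszD erefl) mulr_sumr; apply: ler_sum => j _.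
rewrite coefZ normrM; apply: ler_pM => //.
  exact: pn_ge_int.
exact: pn_ge_int.
Qed.

Section EvLemmas.
Variable R : realType.
Implicit Types (p q : {poly int}) (x : R).
Lemma evD p q x : ev (p + q) x = ev p x + ev q x.
Proof. by rewrite /ev rmorphD hornerD. Qed.
Lemma evB p q x : ev (p - q) x = ev p x - ev q x.
Proof. by rewrite /ev rmorphB hornerD hornerN. Qed.
Lemma evM p q x : ev (p * q) x = ev p x * ev q x.
Proof. by rewrite /ev rmorphM hornerM. Qed.
Lemma evXn p n x : ev (p ^+ n) x = ev p x ^+ n.
Proof. by rewrite /ev rmorphXn horner_exp. Qed.
Lemma evC (c : int) x : ev c%:P x = c%:~R.
Proof. by rewrite /ev map_polyC hornerC. Qed.
Lemma ev1 x : ev 1 x = 1.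
Proof. by rewrite /ev rmorph1 hornerC. Qed.
Lemma evX x : ev 'X x = x.
Proof. by rewrite /ev map_polyX hornerX. Qed.
Lemma evPXn n x : ev 'X^n x = x ^+ n.
Proof. by rewrite /ev map_polyXn hornerXn. Qed.
Lemma evZ (c : int) p x : ev (c *: p) x = c%:~R * ev p x.
Proof. by rewrite -mul_polyC evM evC. Qed.
Lemma evsum (I : Type) (s : seq I) (Pr : pred I) (F : I -> {poly int}) x :
  ev (\sum_(j <- s | Pr j) F j) x = \sum_(j <- s | Pr j) ev (F j) x.
Proof. by rewrite /ev rmorph_sum horner_sum. Qed.
End EvLemmas.

Lemma ev_Up (R : realType) k r (P : {poly int}) (z : R) :
  (size P <= k.+1)%N -> z != 0 ->
  ev (Up k r P) z = z ^+ k * ev P (r%:~R + z^-1).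
Proof.
move=> sP z0; rewrite (@ev_sum R P _ k.+1 sP) mulr_sumr /Up evsum.
apply: eq_bigr => j _; rewrite evZ /Aj evM evXn evD evM evC evX ev1 evPXn.
have jk : (j <= k)%N by rewrite -ltnS.
have -> : (r%:~R * z + 1) = z * (r%:~R + z^-1) :> R.
  by rewrite mulrDr mulfV // mulrC.
have -> : z ^+ k = z ^+ j * z ^+ (k - j) by rewrite -exprD subnKC.
rewrite exprMn.
ring.
Qed.

Lemma intr_natE (R : pzRingType) (n : nat) : (n%:Z)%:~R = n%:R :> R.
Proof. by []. Qed.

Lemma size_Tp k M r P : (size (Tp k M r P) <= k.+1)%N.
Proof. exact: size_poly. Qed.

Lemma coef_Tp k M r P m : (Tp k M r P)`_m = if (m < k.+1)%N then (M ^ m)%N%:Z * (Up k r P)`_m else 0.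
Proof. by rewrite coef_poly. Qed.

Lemma ev_Tp (R : realType) k M r P (y : R) :
  ev (Tp k M r P) y = ev (Up k r P) (M%:R * y).
Proof.
rewrite (@ev_sum R _ _ k.+1 (size_Tp _ _ _ _)) (@ev_sum R _ _ k.+1 (size_Up _ _ _)).
apply: eq_bigr => m _; rewrite coef_Tp ltn_ord intrM exprMn.
rewrite intr_natE natrX; ring.
Qed.

Lemma size_Sp k M r Q : (size (Sp k M r Q) <= k.+1)%N.
Proof.
rewrite /Sp; apply: (big_ind (fun p : {poly int} => size p <= k.+1)%N).
- by rewrite size_poly0.
- by move=> p q hp hq; apply: leq_trans (size_polyD _ _) _; rewrite geq_max hp.
- move=> m _; apply: leq_trans (size_scale_leq _ _) _.
  apply: leq_trans (size_poly_exp_leq _ _) _; rewrite ltnS.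
  have hs : (size ((M%:Z)%:P * ('X - r%:P))%R <= 2)%N.
    apply: leq_trans (size_mul_leq _ _) _; rewrite size_XsubC addnS /= addn1 ltnS.
    by rewrite size_polyC leq_b1.
  have h1 : ((size ((M%:Z)%:P * ('X - r%:P))%R : nat).-1 <= 1)%N.
    by move: hs; case: (size _) => [|[|[|]]].
  by apply: leq_trans (leq_mul h1 (leqnn _)) _; rewrite mul1n leq_subr.
Qed.

Lemma ev_Sp (R : realType) k M r (Q : {poly int}) (x : R) :
  (size Q <= k.+1)%N -> M%:R * (x - r%:~R) != 0 ->
  ev (Sp k M r Q) x = (M%:R * (x - r%:~R)) ^+ k * ev Q (M%:R * (x - r%:~R))^-1.
Proof.
move=> sQ; set u := M%:R * (x - r%:~R) => u0.
rewrite (@ev_sum R Q _ k.+1 sQ) mulr_sumr /Sp evsum.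
apply: eq_bigr => m _; rewrite evZ evXn evM evC evB evX evC intr_natE.
have mk : (m <= k)%N by rewrite -ltnS.
have -> : u ^+ k = u ^+ (k - m) * u ^+ m by rewrite -exprD subnK.
rewrite exprVn -[u ^- m]/(u ^+ m)^-1.
have um : u ^+ m != 0 by rewrite expf_neq0.
rewrite -/u; field.
exact: um.
Qed.

Lemma poly_eq_ev (R : realType) (p q : {poly int}) :
  (forall y : R, y != 0 -> ev p y = ev q y) -> p = q.
Proof.
move=> H; apply: (@map_inj_poly _ _ (fun z : int => z%:~R : R)).
- exact: intr_inj.
- by [].
apply/eqP; rewrite -subr_eq0; apply/eqP.
set d := _ - _.
apply: (@roots_geq_poly_eq0 _ d [seq (i.+1)%:R | i <- iota 0 (size d)]).
- apply/allP => _ /mapP [i _ ->]; rewrite /root /d hornerD hornerN.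
  by rewrite -/(ev p _) -/(ev q _) H ?subrr // pnatr_eq0.
- rewrite map_inj_uniq ?iota_uniq // => i j /eqP; rewrite eqr_nat.
  by move/eqP => [].
- by rewrite size_map size_iota.
Qed.

Lemma TS_id (R : realType) k M r (Q : {poly int}) : (0 < M)%N -> (size Q <= k.+1)%N ->
  Tp k M r (Sp k M r Q) = (M ^ k)%N%:Z *: Q.
Proof.
move=> M0 sQ; apply: (@poly_eq_ev R) => y y0.
have M0' : M%:R != 0 :> R by rewrite pnatr_eq0 -lt0n.
have My0 : M%:R * y != 0 by rewrite mulf_neq0.
rewrite ev_Tp (@ev_Up R k r _ _ (size_Sp _ _ _ _) My0) evZ.
have u0 : M%:R * (r%:~R + (M%:R * y)^-1 - r%:~R) = y^-1 :> R.
  by rewrite addrAC subrr add0r invfM mulrA mulfV // mul1r.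
rewrite ev_Sp // ?u0 ?invr_eq0 // invrK intr_natE natrX exprMn exprVn.
field; exact: expf_neq0.
Qed.

Lemma pn_attained (P : {poly int}) : exists j, polnorm P = absz (P`_j)%R.
Proof.
rewrite /polnorm; case E: (size P) => [|n].
  by exists 0%N; rewrite big_ord0 nth_default ?E.
rewrite (@bigop.bigmax_eq_arg _ (ord0 : 'I_n.+1)) //.
by eexists.
Qed.

Lemma pn_scale_ge (c : int) (Q : {poly int}) :
  (absz c * polnorm Q <= polnorm (c *: Q))%N.
Proof.
have [j ->] := pn_attained Q; apply: leq_trans (pn_ge _ j).
by rewrite coefZ abszM.
Qed.

Definition Dr k r : nat := (\sum_(j < k.+1) polnorm (Aj k r j))%N.

Lemma pn_Up k r P : (polnorm (Up k r P) <= polnorm P * Dr k r)%N.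
Proof. exact: (pn_sum_scale k.+1 P (Aj k r)). Qed.

Lemma pn_Tp_le k M r P : (0 < M)%N ->
  (polnorm (Tp k M r P) <= M ^ k * polnorm (Up k r P))%N.
Proof.
move=> M0; apply: pn_le => m; rewrite coef_Tp; case: ifP => mk; last by [].
rewrite abszM; apply: leq_mul; last exact: pn_ge.
by rewrite leq_pexp2l // -ltnS.
Qed.

Lemma pn_Tp_lead k M r (P : {poly int}) CL : (0 < M)%N -> (Dr k r * CL < M)%N ->
  (size P <= k.+1)%N -> (polnorm P <= CL * absz P.[r])%N ->
  absz ((Tp k M r P)`_k)%R = polnorm (Tp k M r P) /\
  polnorm (Tp k M r P) = (M ^ k * absz P.[r])%N.
Proof.
move=> M0 MD sP PL.
have Tk : absz ((Tp k M r P)`_k)%R = (M ^ k * absz P.[r])%N.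
  by rewrite coef_Tp ltnSn abszM coef_Up.
suff e : polnorm (Tp k M r P) = (M ^ k * absz P.[r])%N by rewrite Tk e.
apply/eqP; rewrite eqn_leq -{2}Tk pn_ge andbT.
apply: pn_le => m; rewrite coef_Tp; case: ltnP => mk; last by [].
rewrite abszM; have [->|mk'] := eqVneq m k; first by rewrite coef_Up.
have mlk : (m < k)%N by rewrite ltn_neqAle mk' -ltnS.
apply: (@leq_trans (M ^ m * (polnorm P * Dr k r))).
  by rewrite leq_mul2l (leq_trans (pn_ge _ _) (pn_Up _ _ _)) orbT.
apply: (@leq_trans (M ^ m * (M * absz P.[r]))).
  rewrite leq_mul2l; apply/orP; right.
  apply: (@leq_trans (CL * absz P.[r] * Dr k r)); first by rewrite leq_mul2r PL orbT.
  rewrite mulnAC leq_mul2r; apply/orP; right.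
  by rewrite mulnC ltnW.
by rewrite mulnA -expnSr leq_mul2r leq_pexp2l // orbT.
Qed.

Definition Er k M r : nat :=
  (\sum_(m < k.+1) polnorm (((M%:Z)%:P * ('X - r%:P)) ^+ (k - m)))%N.

Lemma pn_Sp k M r Q : (polnorm (Sp k M r Q) <= polnorm Q * Er k M r)%N.
Proof. exact: (pn_sum_scale k.+1 Q (fun m => ((M%:Z)%:P * ('X - r%:P)) ^+ (k - m))). Qed.

Lemma pn_Sp_lower (R : realType) k M r (Q : {poly int}) : (0 < M)%N -> (size Q <= k.+1)%N ->
  (polnorm Q <= Dr k r * polnorm (Sp k M r Q))%N.
Proof.
move=> M0 sQ.
have h := pn_scale_ge (M ^ k)%N%:Z Q.
rewrite -(@TS_id R k M r Q M0 sQ) in h.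
have h2 := leq_trans h (pn_Tp_le _ _ _ _ M0).
rewrite leq_mul2l in h2.
case/orP: h2 => [|h2]; first by rewrite expn_eq0 eqn0Ngt M0.
by apply: leq_trans h2 _; rewrite mulnC pn_Up.
Qed.
Local Open Scope classical_set_scope.

Lemma fam_mono (R : realType) lead k (xi w w' : R) : w' <= w ->
  fam lead k xi w `<=` fam lead k xi w'.
Proof.
move=> ww P [P0 sP lP HP]; split => //; apply: le_trans HP _.
apply: ler_powR; last by rewrite lerN2.
by rewrite ler1n pn_gt0.
Qed.

Lemma dir_T (R : realType) k (r : int) M CL (xi w w' : R) :
  (0 < M)%N -> (0 < CL)%N -> (Dr k r * CL < M)%N -> xi != r%:~R -> w' < w ->
  ~ finite_set (fam false k xi w `&` (fun P => polnorm P <= CL * absz P.[r])%N) ->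
  omega_set true k ((M%:R * (xi - r%:~R))^-1) w'.
Proof.
move=> M0 CL0 MD xr ww Hinf.
have CL0' : 0 < CL%:R :> R by rewrite ltr0n.
have z0 : xi - r%:~R != 0 by rewrite subr_eq0.
have M0' : M%:R != 0 :> R by rewrite pnatr_eq0 -lt0n.
apply: (@transfer R k xi _ w w' (Tp k M r) (fun P => (polnorm P <= CL * absz P.[r])%N) (CL%:R^-1)
   ((M ^ k * Dr k r)%N%:R + 1) (`|(xi - r%:~R)^-1| ^+ k) true) => //.
- by rewrite invr_gt0.
- apply: (@le_trans _ _ 1); last by rewrite lerDr.
  by rewrite invr_le1 // ?ler1n // unitfE gt_eqF.
move=> P P0 sP PrP.
have [lead e] := @pn_Tp_lead k M r P CL M0 MD sP PrP.
have Pr1 : (0 < absz P.[r])%N.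
  by move: (leq_trans (pn_gt0 _ P0) PrP); rewrite muln_gt0 => /andP [].
split => //.
- by rewrite -pn_eq0 e -lt0n muln_gt0 expn_gt0 M0 Pr1.
- exact: size_Tp.
- split.
    rewrite ler_pdivrMl // e -natrM ler_nat.
    by apply: leq_trans PrP _; rewrite leq_mul2l leq_pmull ?expn_gt0 ?M0 ?orbT.
  apply: (@le_trans _ _ ((M ^ k * Dr k r)%N%:R * (polnorm P)%:R)); last first.
    by rewrite ler_wpM2r // lerDl.
  rewrite -natrM ler_nat; apply: leq_trans (pn_Tp_le _ _ _ _ M0) _.
  by rewrite -mulnA leq_mul2l mulnC pn_Up orbT.
rewrite ev_Tp.
have -> : M%:R * (M%:R * (xi - r%:~R))^-1 = (xi - r%:~R)^-1.
  by rewrite invfM mulrA mulfV // mul1r.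
rewrite (@ev_Up R k r P _ sP) ?invr_eq0 // invrK [r%:~R + _]addrC subrK.
by rewrite normrM normrX.
Qed.

Lemma dir_S (R : realType) k (r : int) M (xi w w' : R) :
  (0 < M)%N -> xi != r%:~R -> w' < w ->
  omega_set false k ((M%:R * (xi - r%:~R))^-1) w ->
  omega_set false k xi w'.
Proof.
move=> M0 xr ww Hinf.
have z0 : xi - r%:~R != 0 by rewrite subr_eq0.
have M0' : M%:R != 0 :> R by rewrite pnatr_eq0 -lt0n.
have u0 : M%:R * (xi - r%:~R) != 0 by rewrite mulf_neq0.
apply: (@transfer R k ((M%:R * (xi - r%:~R))^-1) xi w w' (Sp k M r) setT (((Dr k r).+1)%:R^-1)
   ((Er k M r)%:R + 1) (`|M%:R * (xi - r%:~R)| ^+ k) false) => //.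
- apply: (@le_trans _ _ 1); last by rewrite lerDr.
  by rewrite invr_le1 // ?ler1n // unitfE.
- move=> Q Q0 sQ _.
  have hl := @pn_Sp_lower R k M r Q M0 sQ.
  split => //.
  - rewrite -pn_eq0; apply/eqP => h; move: hl; rewrite h muln0 leqn0 pn_eq0.
    by rewrite (negPf Q0).
  - exact: size_Sp.
  - split.
      rewrite ler_pdivrMl // -natrM ler_nat.
      by apply: leq_trans hl _; rewrite leq_mul2r leqnSn orbT.
    apply: (@le_trans _ _ ((Er k M r)%:R * (polnorm Q)%:R)).
      by rewrite -natrM ler_nat mulnC pn_Sp.
    by rewrite ler_wpM2r // lerDl.
  rewrite (@ev_Sp R k M r Q xi sQ u0).
  by rewrite normrM normrX.
by rewrite setIT.
Qed.

Theorem mainTheorem1 (R : realType) (k : nat) (hk : (1 <= k)%N)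
  (r : 'I_k.+1 -> int) (hr : injective r) :
  exists M : nat, (1 <= M)%N /\
    forall xi : R, exists i : 'I_k.+1,
      (r i)%:~R != xi /\
      (let xii := (M%:R * (xi - (r i)%:~R))^-1 in
       omega_lead k xii = omega k xii /\ omega k xii = omega k xi).
Proof.
have [CL [CL0 HL]] := @lagr_bound k r hr.
pose Dt := (\sum_(i < k.+1) Dr k (r i))%N.
exists (Dt * CL).+1; split => //.
have M0 : (0 < (Dt * CL).+1)%N by [].
have MD : forall i, (Dr k (r i) * CL < (Dt * CL).+1)%N.
  move=> i; rewrite ltnS leq_mul2r; apply/orP; right.
  by rewrite /Dt (bigD1 i) //= leq_addr.
move=> xi.
pose Pr i := fun P : {poly int} => (polnorm P <= CL * absz P.[r i])%N.
pose good i w := ~ finite_set (fam false k xi w `&` Pr i).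
pose S := omega_set false k xi.
have hs : forall w (A : set {poly int}) P, (fam false k xi w `&` A) P -> (size P <= k.+1)%N.
  by move=> w A P [[]].
have hA : forall w, S w -> exists i, good i w.
  move=> w Sw; apply: contrapT => hn.
  apply: Sw.
  apply: (@sub_finite_set _ _ (\bigcup_(i in setT) (fam false k xi w `&` Pr i))).
    move=> P hP; have [i Hi] := HL P (let: And4 _ s _ _ := hP in s).
    by exists i => //; split.
  apply: bigcup_finite; first exact: finite_finset.
  move=> i _; apply: contrapT => h; apply: hn; exists i; exact: h.
have hB : forall i w w', good i w -> w' <= w -> good i w'.
  move=> i w w' g ww; apply: sub_infinite_set g.
  by move=> P [hf hp]; split => //; exact: fam_mono ww _ hf.
have hC : exists i, forall w, S w -> good i w.
  apply: contrapT => hn.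
  have hn' : forall i, exists w, S w /\ ~ good i w.
    move=> i; apply: contrapT => h; apply: hn; exists i => w Sw.
    by apply: contrapT => g; apply: h; exists w.
  have [wf hwf] := choice hn'.
  have hmax : forall s : seq 'I_k.+1, exists w, S w /\ forall i, i \in s -> wf i <= w.
    elim => [|i s [w [Sw Hw]]]; first by exists (wf ord0); split => //; exact: (hwf ord0).1.
    have [h|h] := leP w (wf i).
      exists (wf i); split; first exact: (hwf i).1.
      move=> j; rewrite inE => /orP [/eqP -> //| js]; exact: le_trans (Hw j js) h.
    exists w; split => // j; rewrite inE => /orP [/eqP -> | js]; [exact: ltW h | exact: Hw].
  have [w [Sw Hw]] := hmax (enum 'I_k.+1).
  have [i gi] := hA w Sw.
  by apply: (hwf i).2; apply: hB gi _; apply: Hw; rewrite mem_enum.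
have [i Hi] := hC.
exists i.
have ri : (r i)%:~R != xi.
  apply/eqP => rx.
  have S1 : S 1.
    rewrite /S omega_setE; apply: unbounded_infinite => B.
    pose P : {poly int} := (B.+1)%:Z%:P * ('X - (r i)%:P).
    have hP1 : (B.+1 <= polnorm P)%N.
      apply: leq_trans (pn_ge _ 1); rewrite /P coefCM coefB coefX coefC /=.
      by rewrite addn0 muln1.
    exists P; split; last exact: ltnW.
    split => //.
    - by rewrite -pn_eq0 -lt0n (leq_trans _ hP1).
    - apply: leq_trans (size_mul_leq _ _) _; rewrite size_XsubC addnS /= addn1.
      by rewrite ltnS (leq_trans _ hk) // size_polyC leq_b1.
    - change (`|ev P xi| <= (polnorm P)%:R `^ (-1)).
      rewrite /P evM evB evX evC evC -rx subrr mulr0 normr0.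
      exact: powR_ge0.
  have [P [[[P0 sP _ HP] PrP] NP]] := @infinite_unbounded _ k.+1 (hs 1 _) (Hi 1 S1) 2.
  have Pn1 : (1 <= (polnorm P)%:R :> R) by rewrite ler1n (leq_trans _ NP).
  have e0 : P.[r i] = 0.
    have evE : ev P xi = (P.[r i])%:~R by rewrite -rx /ev horner_map.
    apply/eqP; apply: contraLR HP => h; rewrite -ltNge.
    rewrite -/(ev P xi) evE -intr_norm -natr_absz.
    apply: (@lt_le_trans _ _ 1).
      rewrite powR_inv1 ?ler0n // invf_lt1 ?ltr1n //.
      by rewrite ltr0n (leq_trans _ NP).
    by rewrite ler1n lt0n absz_eq0.
  by move: PrP; rewrite /Pr e0 muln0 leqn0 pn_eq0 (negPf P0).
split => //.
have xr : xi != (r i)%:~R by rewrite eq_sym.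
rewrite /omega /omega_lead /=.
have h1 : (ereal_sup (EFin @` omega_set true k ((Dt * CL).+1%:R * (xi - (r i)%:~R))^-1) <=
           ereal_sup (EFin @` omega_set false k ((Dt * CL).+1%:R * (xi - (r i)%:~R))^-1))%E.
  apply: ereal_sup_le; apply: image_subset => w; rewrite !omega_setE.
  by apply: sub_infinite_set => P [P0 sP _ HP]; split.
have h2 := @sup_le_of R _ _ (fun w (Sw : S w) w' ww => @dir_T R k (r i) _ CL xi w w' M0 CL0 (MD i) xr ww (Hi w Sw)).
have h3 := @sup_le_of R _ _ (fun w Sw w' ww => @dir_S R k (r i) _ xi w w' M0 xr ww Sw).
split; apply/eqP; rewrite eq_le.
  by rewrite h1 (le_trans h3 h2).
by rewrite h3 (le_trans h2 h1).
Qed.
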